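(* Let $X\subset\mathbf{P}^3$ be an integral surface over an algebraically closed field, let $P$ be a non-singular closed point of $X$, and let $C$ be an integral curve on $X$ passing through $P$ which is not contained in the tangent plane $T_{X,P}$ of $X$ at $P$. Then the multiplicity of $C$ at $P$ is at most half the degree of $C$. *)

(* Defs.v *)
From HB Require Import structures.
From mathcomp Require Import all_boot all_order all_algebra.
From mathcomp Require Import mpoly.

Set Implicit Arguments.
Unset Strict Implicit.
Unset Printing Implicit Defensive.

Import Order.TTheory GRing.Theory Num.Theory.
Local Open Scope ring_scope.

Section Defs.
Variable k : closedFieldType.

(* Points of k^4; a closed point of P^3 is represented by a nonzero vector. *)
Definition pt := 'I_4 -> k.
Definition nonzero_pt (x : pt) : Prop := exists i, x i != 0.

(* F is a homogeneous irreducible polynomial of degree d >= 1: X = V(F) is an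
   integral surface of P^3. *)
Definition homog_irreducible (F : {mpoly k[4]}) (d : nat) : Prop :=
  [/\ F != 0, F \is d.-homog, (0 < d)%N &
      forall p q : {mpoly k[4]}, F = p * q -> (msize p <= 1)%N \/ (msize q <= 1)%N].

(* P is a non-singular point of X = V(F) (Jacobian criterion). *)
Definition nonsingular_point (F : {mpoly k[4]}) (P : pt) : Prop :=
  F.@[P] = 0 /\ exists i, (mderiv i F).@[P] != 0.

Definition tangent_form (F : {mpoly k[4]}) (P : pt) : {mpoly k[4]} :=
  \sum_(i < 4) (mderiv i F).@[P] *: 'X_i.

(* A subset of P^3, given as its (punctured) affine cone in k^4. *)
Definition ideal_of (C : pt -> Prop) (p : {mpoly k[4]}) : Prop :=
  forall x, C x -> p.@[x] = 0.

Definition integral_closed_subset (C : pt -> Prop) : Prop :=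
  [/\ (forall x, C x -> nonzero_pt x),
      (forall x (c : k), C x -> c != 0 -> C (fun i => c * x i)),
      (forall x, nonzero_pt x -> (forall p, ideal_of C p -> p.@[x] = 0) -> C x),
      (exists x, C x) &
      (forall p q, ideal_of C (p * q) -> ideal_of C p \/ ideal_of C q)].

Definition indep_mod (J : {mpoly k[4]} -> Prop) (N : nat) (s : 'I_N -> {mpoly k[4]}) : Prop :=
  forall c : 'I_N -> k, J (\sum_(i < N) c i *: s i) -> forall i, c i = 0.

(* dim_k (S/I(C))_d = N, S = k[x0..x3] (value of the Hilbert function). *)
Definition hilb_dim (C : pt -> Prop) (d N : nat) : Prop :=
  (exists s : 'I_N -> {mpoly k[4]}, (forall i, s i \is d.-homog) /\ indep_mod (ideal_of C) s) /\
  (forall s : 'I_N.+1 -> {mpoly k[4]}, (forall i, s i \is d.-homog) -> ~ indep_mod (ideal_of C) s).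

(* C is a curve (its Hilbert polynomial has degree 1) of degree e
   (leading coefficient of the Hilbert polynomial). *)
Definition curve_of_degree (C : pt -> Prop) (e : nat) : Prop :=
  (0 < e)%N /\ exists (c : int) (d0 : nat), forall d, (d0 <= d)%N ->
    exists N, hilb_dim C d N /\ (N%:Z = e%:Z * d%:Z + c)%R.

(* r lies in m_P^n, m_P the maximal ideal of the point P of k^4: all Taylor
   coefficients of r at P of order < n vanish. *)
Definition vanish_to_order (P : pt) (n : nat) (r : {mpoly k[4]}) : Prop :=
  forall m : 'X_{1..4}, (mdeg m < n)%N ->
    (r \mPo [tuple 'X_i + (P i)%:MP | i < 4])@_m = 0.

(* The ideal I(C) + (l - 1) + m_P^n of k[x0..x3]; its quotient is
   O_{C,P} / m^n, computed in the affine chart {l = 1} of P^3. *)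
Definition local_ideal (C : pt -> Prop) (P : pt) (l : {mpoly k[4]}) (n : nat)
  (p : {mpoly k[4]}) : Prop :=
  exists a b r, [/\ ideal_of C a, vanish_to_order P n r & p = a + b * (l - 1) + r].

Definition quot_dim (J : {mpoly k[4]} -> Prop) (N : nat) : Prop :=
  (exists s : 'I_N -> {mpoly k[4]}, indep_mod J s) /\
  (forall s : 'I_N.+1 -> {mpoly k[4]}, ~ indep_mod J s).

(* The (Hilbert-Samuel) multiplicity of the curve C at P is m:
   length(O_{C,P}/m^n) = m n + c for n large. *)
Definition curve_mult (C : pt -> Prop) (P : pt) (m : nat) : Prop :=
  exists l : {mpoly k[4]}, [/\ l \is 1.-homog, l.@[P] = 1 &
    exists (c : int) (n0 : nat), forall n, (n0 <= n)%N ->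
      exists N, quot_dim (local_ideal C P l n) N /\ (N%:Z = m%:Z * n%:Z + c)%R].

End Defs.

(* Main.v *)
Require Import Defs.
From mathcomp Require Import all_boot all_order all_algebra.
From mathcomp Require Import mpoly.
From mathcomp Require Import zify ring lra.

Set Implicit Arguments.
Unset Strict Implicit.
Unset Printing Implicit Defensive.
Import Order.TTheory GRing.Theory Num.Theory.
Local Open Scope ring_scope.

Section Aux.
Variable k : closedFieldType.
Local Notation S := {mpoly k[4]}.

Lemma ideal_add (C : pt k -> Prop) p q : ideal_of C p -> ideal_of C q -> ideal_of C (p + q).
Proof. by move=> hp hq x Cx; rewrite mevalD hp ?hq ?addr0. Qed.
Lemma ideal_opp (C : pt k -> Prop) p : ideal_of C p -> ideal_of C (- p).
Proof. by move=> hp x Cx; rewrite mevalN hp ?oppr0. Qed.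
Lemma ideal_mull (C : pt k -> Prop) p q : ideal_of C p -> ideal_of C (q * p).
Proof. by move=> hp x Cx; rewrite mevalM hp ?mulr0. Qed.
Lemma ideal_scale (C : pt k -> Prop) c p : ideal_of C p -> ideal_of C (c *: p).
Proof. by move=> hp x Cx; rewrite mevalZ hp ?mulr0. Qed.
Lemma ideal0 (C : pt k -> Prop) : ideal_of C 0.
Proof. by move=> x _; rewrite meval0. Qed.

Definition shift (a : 'I_4 -> k) : 4.-tuple S := [tuple 'X_i + (a i)%:MP | i < 4].

Definition Nv (n : nat) (g : S) := forall m : 'X_{1..4}, (mdeg m < n)%N -> g@_m = 0.

Lemma vanishE (P : pt k) n r : vanish_to_order P n r <-> Nv n (r \mPo shift P).
Proof. by []. Qed.

Lemma Nv_add n p q : Nv n p -> Nv n q -> Nv n (p + q).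
Proof. by move=> hp hq m hm; rewrite mcoeffD hp ?hq ?addr0. Qed.
Lemma Nv_opp n p : Nv n p -> Nv n (- p).
Proof. by move=> hp m hm; rewrite mcoeffN hp ?oppr0. Qed.
Lemma Nv_scale n c p : Nv n p -> Nv n (c *: p).
Proof. by move=> hp m hm; rewrite mcoeffZ hp ?mulr0. Qed.
Lemma Nv0 n : Nv n 0.
Proof. by move=> m _; rewrite mcoeff0. Qed.
Lemma Nv_any p : Nv 0 p.
Proof. by []. Qed.

Lemma Nv_mul a b p q : Nv a p -> Nv b q -> Nv (a + b) (p * q).
Proof.
move=> hp hq m hm; rewrite mpolyME raddf_sum /= big1 // => mm _.
rewrite mcoeffZ mcoeffX; case: eqP => [e|_]; last by rewrite mulr0.
move: hm; rewrite -e mdegD => hm.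
case: (ltnP (mdeg mm.1) a) => h1; first by rewrite hp // !mul0r.
rewrite hq ?mulr0 ?mul0r //; lia.
Qed.


Lemma compK (s1 s2 : 4.-tuple S) : (forall i, tnth s1 i \mPo s2 = 'X_i) ->
  forall p : S, (p \mPo s1) \mPo s2 = p.
Proof.
move=> h; elim/mpolyind => [|c m p _ _ IH]; first by rewrite !comp_mpoly0.
rewrite !comp_mpolyD !comp_mpolyZ IH comp_mpolyX rmorph_prod /=.
congr (_ *: _ + _); rewrite [RHS]mpolyXE_id; apply: eq_bigr => i _.
by rewrite rmorphXn /= h.
Qed.

Lemma vanish_add (P : pt k) n p q : vanish_to_order P n p -> vanish_to_order P n q ->
  vanish_to_order P n (p + q).
Proof. by rewrite !vanishE comp_mpolyD; apply: Nv_add. Qed.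
Lemma vanish_opp (P : pt k) n p : vanish_to_order P n p -> vanish_to_order P n (- p).
Proof. by rewrite !vanishE comp_mpolyN; apply: Nv_opp. Qed.
Lemma vanish_scale (P : pt k) n c p : vanish_to_order P n p -> vanish_to_order P n (c *: p).
Proof. by rewrite !vanishE comp_mpolyZ; apply: Nv_scale. Qed.
Lemma vanish0 (P : pt k) n : vanish_to_order P n 0.
Proof. by rewrite vanishE comp_mpoly0; apply: Nv0. Qed.
Lemma vanish_mul (P : pt k) a b p q : vanish_to_order P a p -> vanish_to_order P b q ->
  vanish_to_order P (a + b) (p * q).
Proof. by rewrite !vanishE rmorphM /=; apply: Nv_mul. Qed.
Lemma vanish_le (P : pt k) a b p : (b <= a)%N -> vanish_to_order P a p -> vanish_to_order P b p.
Proof. by move=> hab h m hm; apply: h; apply: leq_trans hab. Qed.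
Lemma vanish_mulr (P : pt k) a p q : vanish_to_order P a p -> vanish_to_order P a (p * q).
Proof. by move=> h; rewrite -[a]addn0; apply: vanish_mul. Qed.
Lemma vanish_mull (P : pt k) a p q : vanish_to_order P a p -> vanish_to_order P a (q * p).
Proof. by move=> h; rewrite mulrC; apply: vanish_mulr. Qed.
Lemma vanish_any (P : pt k) p : vanish_to_order P 0 p.
Proof. by []. Qed.

Lemma vanish_lin (P : pt k) (i : 'I_4) : vanish_to_order P 1 ('X_i - (P i)%:MP).
Proof.
rewrite vanishE comp_mpolyB comp_mpolyC comp_mpolyXU /shift -tnth_nth tnth_mktuple.
rewrite addrK => m; rewrite ltnS leqn0 mdeg_eq0 => /eqP ->.
by rewrite mcoeffX mnm1_eq0.
Qed.


Definition Lfun (P : pt k) (p : S) : S :=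
  \sum_(i < 4) (p^`M(i)).@[P] *: ('X_i - (P i)%:MP).
Definition Rfun (P : pt k) (p : S) : S := p - (p.@[P])%:MP - Lfun P p.

Lemma Lfun_vanish (P : pt k) p : vanish_to_order P 1 (Lfun P p).
Proof.
apply: (big_ind (vanish_to_order P 1)); [exact: vanish0|exact: vanish_add|].
by move=> i _; apply/vanish_scale/vanish_lin.
Qed.

Lemma LfunD (P : pt k) p q : Lfun P (p + q) = Lfun P p + Lfun P q.
Proof.
rewrite /Lfun -big_split /=; apply: eq_bigr => i _.
by rewrite mderivD mevalD scalerDl.
Qed.
Lemma LfunZ (P : pt k) c p : Lfun P (c *: p) = c *: Lfun P p.
Proof.
rewrite /Lfun scaler_sumr; apply: eq_bigr => i _.
by rewrite mderivZ mevalZ scalerA.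
Qed.
Lemma LfunC (P : pt k) c : Lfun P c%:MP = 0.
Proof. by rewrite /Lfun big1 // => i _; rewrite mderivC meval0 scale0r. Qed.
Lemma LfunM (P : pt k) p q :
  Lfun P (p * q) = q.@[P] *: Lfun P p + p.@[P] *: Lfun P q.
Proof.
rewrite /Lfun !scaler_sumr -big_split /=; apply: eq_bigr => i _.
rewrite mderivM mevalD !mevalM scalerDl !scalerA.
by congr (_ *: _ + _ *: _); rewrite mulrC.
Qed.
Lemma submm' (m : 'X_{1..4}) : (m - m)%MM = 0%MM.
Proof. by apply/mnmP => i; rewrite mnmBE mnm0E subnn. Qed.

Lemma LfunX (P : pt k) (j : 'I_4) : Lfun P 'X_j = 'X_j - (P j)%:MP.
Proof.
rewrite /Lfun (bigD1 j) //= big1 ?addr0.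
  by rewrite mderivX mnm1E eqxx submm' mpolyX0 scale1r meval1 scale1r.
move=> i /negbTE ne; rewrite mderivX mnm1E eq_sym ne scale0r meval0 scale0r //.
Qed.

Lemma ringid (p q x y a b p0 q0 : S) : p = p0 + x + a -> q = q0 + y + b ->
  p * q - p0 * q0 - (q0 * x + p0 * y) = x * y + p0 * b + q0 * a + x * b + a * y + a * b.
Proof. by move=> -> ->; ring. Qed.

Lemma Rfun_vanish (P : pt k) p : vanish_to_order P 2 (Rfun P p).
Proof.
pose G := fun p => vanish_to_order P 2 (Rfun P p).
have GD : forall p q, G p -> G q -> G (p + q).
  move=> p1 q1 h1 h2; rewrite /G /Rfun LfunD mevalD mpolyCD.
  have -> : p1 + q1 - ((p1.@[P])%:MP + (q1.@[P])%:MP) - (Lfun P p1 + Lfun P q1)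
    = Rfun P p1 + Rfun P q1 by rewrite /Rfun; ring.
  exact: vanish_add.
have GC : forall c, G c%:MP.
  by move=> c; rewrite /G /Rfun LfunC mevalC subrr subr0; apply: vanish0.
have GM : forall p q, G p -> G q -> G (p * q).
  move=> p1 q1 h1 h2; rewrite /G.
  have e : Rfun P (p1 * q1) = Lfun P p1 * Lfun P q1 + (p1.@[P])%:MP * Rfun P q1
     + (q1.@[P])%:MP * Rfun P p1 + Lfun P p1 * Rfun P q1 + Rfun P p1 * Lfun P q1
     + Rfun P p1 * Rfun P q1.
    rewrite {1}/Rfun LfunM mevalM mpolyCM -!mul_mpolyC.
    apply: ringid; rewrite /Rfun; ring.
  have v1 := Lfun_vanish P p1; have v2 := Lfun_vanish P q1.
  rewrite e; repeat apply: vanish_add.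
  - exact: (vanish_mul v1 v2).
  - exact: vanish_mull.
  - exact: vanish_mull.
  - apply: (@vanish_le _ 3); first by []. exact: (vanish_mul v1 h2).
  - exact: vanish_mulr.
  - exact: vanish_mulr.
have GX : forall j, G 'X_j.
  move=> j; rewrite /G /Rfun LfunX mevalXU.
  by rewrite subrr; apply: vanish0.
elim/mpolyind: p => [|c m p _ _ IH]; first by rewrite -mpolyC0; apply: (GC).
apply: (GD) => //; rewrite -mul_mpolyC; apply: (GM) => //.
rewrite mpolyXE_id; apply: (big_ind G).
- by rewrite -mpolyC1; apply: (GC).
- by move=> x y hx hy; apply: (GM).
move=> i _; elim: (m i) => [|t IHt]; first by rewrite expr0 -mpolyC1; apply: (GC).
by rewrite exprS; apply: (GM).
Qed.


Lemma euler_mono (m : 'X_{1..4}) :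
  \sum_(i < 4) 'X_i * ('X_[m] : S)^`M(i) = (mdeg m)%:R *: 'X_[m].
Proof.
rewrite mdegE natr_sum scaler_suml; apply: eq_bigr => i _.
rewrite mderivX -scalerAr; case: (posnP (m i)) => [->|hi]; first by rewrite !scale0r.
congr (_ *: _); rewrite -mpolyXD; congr 'X_[_]; apply/mnmP => j.
rewrite mnmDE mnmBE mnm1E; case: eqP => [<-|]; last by rewrite subn0.
by rewrite add1n subn1 prednK.
Qed.

Definition Eul (p : S) : S := \sum_(i < 4) 'X_i * p^`M(i).
Lemma EulD p q : Eul (p + q) = Eul p + Eul q.
Proof. by rewrite /Eul -big_split; apply: eq_bigr => i _; rewrite mderivD mulrDr. Qed.
Lemma Eul0 : Eul 0 = 0.
Proof. by rewrite /Eul big1 // => i _; rewrite mderiv0 mulr0. Qed.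
Lemma EulZ c p : Eul (c *: p) = c *: Eul p.
Proof. by rewrite /Eul scaler_sumr; apply: eq_bigr => i _; rewrite mderivZ scalerAr. Qed.

Lemma euler (F : S) d : F \is d.-homog ->
  \sum_(i < 4) 'X_i * F^`M(i) = d%:R *: F.
Proof.
move=> hF; rewrite -/(Eul F) {1 2}(mpolyE F) (big_morph Eul EulD Eul0) scaler_sumr.
apply: eq_big_seq => m hm.
by rewrite EulZ /Eul euler_mono (dhomog_mf hF hm) !scalerA mulrC.
Qed.

Lemma euler_eval (F : S) d (P : pt k) : F \is d.-homog ->
  \sum_(i < 4) P i * (F^`M(i)).@[P] = d%:R * F.@[P].
Proof.
move=> /euler /(congr1 (meval P)); rewrite mevalZ raddf_sum /= => <-.
by apply: eq_bigr => i _; rewrite mevalM mevalXU.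
Qed.

Lemma tangent_decomp (F : S) d (P : pt k) : F \is d.-homog -> F.@[P] = 0 ->
  exists r, vanish_to_order P 2 r /\ tangent_form F P = F + r.
Proof.
move=> hF hP; exists (- Rfun P F); split; first exact/vanish_opp/Rfun_vanish.
have hT : (tangent_form F P).@[P] = 0.
  transitivity (d%:R * F.@[P]); last by rewrite hP mulr0.
  rewrite /tangent_form raddf_sum /= -(euler_eval P hF).
  by apply: eq_bigr => i _; rewrite mevalZ mevalXU mulrC.
have hL : Lfun P F = tangent_form F P - ((tangent_form F P).@[P])%:MP.
  have -> : (tangent_form F P).@[P] = \sum_(i < 4) (F^`M(i)).@[P] * P i.
    by rewrite /tangent_form raddf_sum /=; apply: eq_bigr => i _; rewrite mevalZ mevalXU.
  rewrite (big_morph (@mpolyC 4 k) (@mpolyCD _ _) (@mpolyC0 _ _)) /tangent_form -sumrB.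
  by apply: eq_bigr => i _; rewrite scalerBr mpolyCM mul_mpolyC.
rewrite /Rfun hL hT hP; ring.
Qed.

Lemma tangent_pow (F T r : S) j : T = F + r -> exists q, T ^+ j = F * q + r ^+ j.
Proof.
move=> ->; elim: j => [|j [q IH]]; first by exists 0; rewrite !expr0 mulr0 add0r.
exists (q * (F + r) + r ^+ j); rewrite exprS IH exprS; ring.
Qed.


Definition congl (l a b : S) := exists c, a - b = c * (l - 1).

Lemma congl_refl l a : congl l a a.
Proof. by exists 0; rewrite subrr mul0r. Qed.
Lemma congl_add l a1 a2 b1 b2 : congl l a1 a2 -> congl l b1 b2 -> congl l (a1 + b1) (a2 + b2).
Proof. by move=> [c1 e1] [c2 e2]; exists (c1 + c2); rewrite mulrDl -e1 -e2; ring. Qed.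
Lemma congl_mul l a1 a2 b1 b2 : congl l a1 a2 -> congl l b1 b2 -> congl l (a1 * b1) (a2 * b2).
Proof.
move=> [c1 e1] [c2 e2]; exists (c1 * b1 + a2 * c2).
have -> : a1 * b1 - a2 * b2 = (a1 - a2) * b1 + a2 * (b1 - b2) by ring.
by rewrite e1 e2; ring.
Qed.
Lemma congl_scale l c a b : congl l a b -> congl l (c *: a) (c *: b).
Proof. by move=> [c1 e1]; exists (c *: c1); rewrite -scalerBr e1 scalerAl. Qed.
Lemma congl_sym l a b : congl l a b -> congl l b a.
Proof. by move=> [c1 e1]; exists (- c1); rewrite mulNr -e1 opprB. Qed.
Lemma congl_exp l a b j : congl l a b -> congl l (a ^+ j) (b ^+ j).
Proof.
move=> h; elim: j => [|j IH]; first by rewrite !expr0; apply: congl_refl.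
by rewrite !exprS; apply: congl_mul.
Qed.
Lemma congl_l l j : congl l 1 (l ^+ j).
Proof.
apply: congl_sym; elim: j => [|j [c e]]; first by rewrite expr0; apply: congl_refl.
exists (l * c + 1); rewrite exprS.
have -> : l * l ^+ j - 1 = l * (l ^+ j - 1) + (l - 1) by ring.
by rewrite e; ring.
Qed.


Lemma shiftK (a b : 'I_4 -> k) : (forall i, a i + b i = 0) ->
  forall p : S, (p \mPo shift a) \mPo shift b = p.
Proof.
move=> hab; apply: compK => i.
rewrite /shift tnth_mktuple comp_mpolyD comp_mpolyC comp_mpolyXU -tnth_nth tnth_mktuple.
by rewrite -addrA -mpolyCD [b i + _]addrC hab addr0.
Qed.

Lemma Xcomp_homog (l : S) (a : 'I_4 -> k) (m : 'X_{1..4}) : l \is 1.-homog ->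
  'X_[m] \mPo [tuple 'X_i + a i *: l | i < 4] \is (mdeg m).-homog.
Proof.
move=> hl; rewrite comp_mpolyX mdegE.
apply: (big_ind2 (fun (p : S) (d : nat) => p \is d.-homog)).
- exact: dhomog1.
- by move=> x1 x2 y1 y2 h1 h2; apply: dhomogM.
move=> i _; rewrite tnth_mktuple.
have h : ('X_i + a i *: l : S) \is 1.-homog.
  by apply: dhomogD; [rewrite dhomogX; apply/eqP; exact: mdeg1|apply: dhomogZ].
by have := dhomogMn (m i) h; rewrite mul1n.
Qed.

Lemma Xcomp_congl (l : S) (a : 'I_4 -> k) (m : 'X_{1..4}) :
  congl l ('X_[m] \mPo shift a) ('X_[m] \mPo [tuple 'X_i + a i *: l | i < 4]).
Proof.
rewrite !comp_mpolyX.
apply: (big_ind2 (congl l)); [exact: congl_refl|by move=> *; apply: congl_mul|].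
move=> i _; apply: congl_exp; rewrite !tnth_mktuple.
exists (- (a i)%:MP).
rewrite -mul_mpolyC; ring.
Qed.

Lemma homogenize (P : pt k) (l : S) n d (q : S) : l \is 1.-homog -> (n <= d.+1)%N ->
  exists u, u \is d.-homog /\
    exists b r, vanish_to_order P n r /\ q - u = b * (l - 1) + r.
Proof.
move=> hl hnd.
pose a := fun i : 'I_4 => - P i.
pose g := q \mPo shift P.
pose cl := fun m : 'X_{1..4} => if (mdeg m < n)%N then g@_m else 0.
pose ch := fun m : 'X_{1..4} => if (mdeg m < n)%N then 0 else g@_m.
pose glow := \sum_(m <- msupp g) cl m *: ('X_[m] : S).
pose ghigh := \sum_(m <- msupp g) ch m *: ('X_[m] : S).
pose th := [tuple 'X_i + a i *: l | i < 4].
pose u := \sum_(m <- msupp g) cl m *: (('X_[m] \mPo th) * l ^+ (d - mdeg m)).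
have hg : g = glow + ghigh.
  rewrite {1}(mpolyE g) /glow /ghigh -big_split /=; apply: eq_bigr => m _.
  by rewrite -scalerDl /cl /ch; case: ifP; rewrite ?addr0 ?add0r.
have hq : q = (glow \mPo shift a) + (ghigh \mPo shift a).
  have e : (g \mPo shift a) = q by rewrite /g shiftK // => i; rewrite /a subrr.
  by rewrite -{1}e hg comp_mpolyD.
exists u; split.
  apply: rpred_sum => m _; rewrite /cl; case: ifP => hm; last by rewrite scale0r rpred0.
  apply: dhomogZ.
  have h := dhomogM (Xcomp_homog a m hl) (dhomogMn (d - mdeg m) hl).
  by rewrite mul1n subnKC in h; last lia.
have [c hc] : congl l (glow \mPo shift a) u.
  rewrite /glow raddf_sum /= /u.
  apply: (big_ind2 (congl l)); [exact: congl_refl|by move=> *; apply: congl_add|].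
  move=> m _; rewrite comp_mpolyZ; apply: congl_scale.
  rewrite -[_ \mPo shift a]mulr1; apply: congl_mul; first exact: Xcomp_congl.
  exact: congl_l.
exists c, (ghigh \mPo shift a); split.
  rewrite vanishE shiftK; last by move=> i; rewrite /a addNr.
  move=> m hm; rewrite /ghigh raddf_sum big1_seq //= => m' _.
  rewrite mcoeffZ mcoeffX /ch; case: eqP => [->|_]; last by rewrite mulr0.
  by rewrite hm mul0r.
rewrite {1}hq -hc; ring.
Qed.


Lemma indep_widen (J : S -> Prop) M N (s : 'I_M -> S) (le : (N.+1 <= M)%N) :
  indep_mod J s -> indep_mod J (fun i : 'I_N.+1 => s (widen_ord le i)).
Proof.
move=> hs c' hJ i.
pose c := fun j : 'I_M => if (j < N.+1)%N then c' (inord j) else 0.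
have e : \sum_(j < N.+1) c' j *: s (widen_ord le j) = \sum_(j < M) c j *: s j.
  transitivity (\sum_(j < N.+1) c (widen_ord le j) *: s (widen_ord le j)).
    by apply: eq_bigr => j _; rewrite /c /= ltn_ord inord_val.
  have h := big_ord_narrow (R:=S) (idx:=0) (op:=+%R) (F:= fun j : 'I_M => c j *: s j) le.
  rewrite /= in h; rewrite -h big_mkcond /=; apply: eq_bigr => j _.
  case: ifP => hj //; by rewrite /c hj scale0r.
rewrite e in hJ; have := hs c hJ (widen_ord le i).
by rewrite /c /= ltn_ord inord_val.
Qed.

Lemma hilb_bound (C : pt k -> Prop) d N M (s : 'I_M -> S) : hilb_dim C d N ->
  (forall i, s i \is d.-homog) -> indep_mod (ideal_of C) s -> (M <= N)%N.
Proof.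
move=> [_ h] hs hi; rewrite leqNgt; apply/negP => lt.
exact: (h _ (fun i => hs _) (indep_widen (le:=lt) hi)).
Qed.

Definition concat a b (s1 : 'I_a -> S) (s2 : 'I_b -> S) (i : 'I_(a + b)) : S :=
  match split i with inl x => s1 x | inr y => s2 y end.

Lemma sum_concat a b (s1 : 'I_a -> S) (s2 : 'I_b -> S) (c : 'I_(a + b) -> k) :
  \sum_(i < a + b) c i *: concat s1 s2 i =
  \sum_(i < a) c (lshift b i) *: s1 i + \sum_(i < b) c (rshift a i) *: s2 i.
Proof.
rewrite big_split_ord /concat; congr (_ + _); apply: eq_bigr => i _.
  by have := unsplitK (inl i : 'I_a + 'I_b); rewrite /= => ->.
by have := unsplitK (inr i : 'I_a + 'I_b); rewrite /= => ->.
Qed.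

Lemma concat_all a b (c : 'I_(a + b) -> k) : (forall i, c (lshift b i) = 0) ->
  (forall i, c (rshift a i) = 0) -> forall i, c i = 0.
Proof.
move=> h1 h2 i; rewrite -(splitK i); case: (split i) => j /=; [exact: h1|exact: h2].
Qed.


Section Local.
Variables (C : pt k -> Prop) (P : pt k) (l : S) (n : nat).
Local Notation J := (local_ideal C P l n).

Lemma local_add p q : J p -> J q -> J (p + q).
Proof.
move=> [a1 [b1 [r1 [h1 h2 ->]]]] [a2 [b2 [r2 [h3 h4 ->]]]].
exists (a1 + a2), (b1 + b2), (r1 + r2); split; [exact: ideal_add|exact: vanish_add|ring].
Qed.
Lemma local_scale c p : J p -> J (c *: p).
Proof.
move=> [a1 [b1 [r1 [h1 h2 ->]]]].
exists (c *: a1), (c *: b1), (c *: r1); split; [exact: ideal_scale|exact: vanish_scale|].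
by rewrite !scalerDr scalerAl.
Qed.
Lemma local_opp p : J p -> J (- p).
Proof. by move=> h; rewrite -scaleN1r; apply: local_scale. Qed.
Lemma local_ideal_of a : ideal_of C a -> J a.
Proof.
by move=> h; exists a, 0, 0; split; [|exact: vanish0|rewrite mul0r !addr0].
Qed.
Lemma local_sum N (f : 'I_N -> S) : (forall i, J (f i)) -> J (\sum_(i < N) f i).
Proof.
move=> h; apply: (big_ind J) => //; [exact/local_ideal_of/ideal0|exact: local_add].
Qed.
End Local.

Lemma ideal_sum (C : pt k -> Prop) N (f : 'I_N -> S) :
  (forall i, ideal_of C (f i)) -> ideal_of C (\sum_(i < N) f i).
Proof.
move=> h; apply: (big_ind (ideal_of C)) => //; [exact: ideal0|exact: ideal_add].
Qed.

Lemma prime_pow (C : pt k -> Prop) (T g : S) j : integral_closed_subset C ->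
  ~ ideal_of C T -> ideal_of C (T ^+ j * g) -> ideal_of C g.
Proof.
move=> [_ _ _ _ hpr] hT; elim: j => [|j IH]; first by rewrite expr0 mul1r.
by rewrite exprS -mulrA => /hpr [//|]; apply: IH.
Qed.

Lemma key (C : pt k -> Prop) (P : pt k) (l T : S) j d N1 N2 N3 :
  integral_closed_subset C -> ~ ideal_of C T -> T \is 1.-homog -> l \is 1.-homog ->
  (j <= d)%N -> (2 * j <= d.+1)%N ->
  (forall g, local_ideal C P l (2 * j) (T ^+ j * g)) ->
  hilb_dim C d N1 -> hilb_dim C (d - j) N2 ->
  quot_dim (local_ideal C P l (2 * j)) N3 -> (N2 + N3 <= N1)%N.
Proof.
move=> hC hT hTh hl hjd hjd2 hTJ hd1 [[s2 [hs2h hs2i]] _] [[s3 hs3] _].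
set J := local_ideal C P l (2 * j).
have [u hu] : exists u : 'I_N3 -> S, forall i, u i \is d.-homog /\ J (s3 i - u i).
  apply: (@fin_all_exists _ (fun _ => S) (fun i u => u \is d.-homog /\ J (s3 i - u))) => i.
  have [u [hu [b [r [hr e]]]]] := homogenize P (s3 i) hl hjd2.
  exists u; split => //; rewrite e; exists 0, b, r; split => //; [exact: ideal0|].
  by rewrite add0r.
have hui : indep_mod J u.
  move=> c hc; apply: hs3.
  have -> : \sum_(i < N3) c i *: s3 i =
     \sum_(i < N3) c i *: u i + \sum_(i < N3) c i *: (s3 i - u i).
    by rewrite -big_split; apply: eq_bigr => i _ /=; rewrite -scalerDr addrC subrK.
  apply: local_add => //; apply: local_sum => i; apply: local_scale; exact: (hu i).2.
pose w := concat (fun i => T ^+ j * s2 i) u.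
apply: (@hilb_bound C d N1 _ w hd1).
  move=> i; rewrite /w /concat; case: (split i) => x; last exact: (hu x).1.
  have := dhomogM (dhomogMn j hTh) (hs2h x); rewrite mul1n subnKC //.
move=> c; rewrite sum_concat => hI.
set A := \sum_(i < N2) c (lshift N3 i) *: s2 i.
have eA : \sum_(i < N2) c (lshift N3 i) *: (T ^+ j * s2 i) = T ^+ j * A.
  by rewrite /A mulr_sumr; apply: eq_bigr => i _; rewrite scalerAr.
rewrite eA in hI.
have hr : forall i, c (rshift N2 i) = 0.
  apply: hui; set B := \sum_(i < N3) _.
  have -> : B = (T ^+ j * A + B) - T ^+ j * A by ring.
  apply: local_add; first exact: local_ideal_of.
  by rewrite -mulrN; apply: hTJ.
have hl' : forall i, c (lshift N3 i) = 0.
  apply: hs2i; apply: (prime_pow (j:=j) hC hT).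
  move: hI; rewrite big1 ?addr0 // => i _; by rewrite hr scale0r.
exact: concat_all.
Qed.

End Aux.

Theorem lemma5p7 (k : closedFieldType) (F : {mpoly k[4]}) (dF : nat)
  (P : 'I_4 -> k) (C : ('I_4 -> k) -> Prop) (e m : nat) :
  homog_irreducible F dF ->
  nonzero_pt P ->
  nonsingular_point F P ->
  integral_closed_subset C ->
  curve_of_degree C e ->
  (forall x, C x -> F.@[x] = 0%R) ->
  C P ->
  ~ (forall x, C x -> (tangent_form F P).@[x] = 0%R) ->
  curve_mult C P m ->
  (2 * m <= e)%N.
Proof.
move=> [_ hFh _ _] _ [hFP _] hC [he [c [d0 hdeg]]] hFC _ hT [l [hl _ [c' [n0 hmult]]]].
have [r [hr eT]] := tangent_decomp hFh hFP.
set T := tangent_form F P in hT eT.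
have hTh : T \is 1.-homog.
  apply: rpred_sum => i _; apply: dhomogZ; rewrite dhomogX; apply/eqP; exact: mdeg1.
have hrj : forall j, vanish_to_order P (2 * j) (r ^+ j).
  elim=> [|j IH]; first by rewrite muln0; apply: vanish_any.
  by rewrite exprS mulnS; apply: vanish_mul.
have hTJ : forall j g, local_ideal C P l (2 * j) (T ^+ j * g).
  move=> j g; have [q eq] := tangent_pow j eT.
  exists (F * (q * g)), 0, (r ^+ j * g); split.
  - by rewrite mulrC; apply: ideal_mull.
  - exact: vanish_mulr (hrj j).
  - by rewrite eq mul0r addr0; ring.
pose j := (n0 + `|c'| + 1)%N.
pose d := (d0 + 2 * j)%N.
have [N1 [h1 e1]] := hdeg d (leq_addr _ _).
have i1 : (d0 <= d - j)%N by rewrite /d; lia.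
have i2 : (n0 <= 2 * j)%N by rewrite /j; lia.
have i3 : (j <= d)%N by rewrite /d; lia.
have i4 : (2 * j <= d.+1)%N by rewrite /d; lia.
have [N2 [h2 e2]] := hdeg (d - j)%N i1.
have [N3 [h3 e3]] := hmult (2 * j)%N i2.
have hk := key hC hT hTh hl i3 i4 (hTJ j) h1 h2 h3.
rewrite /d /j in e1 e2 e3 hk; nia.
Qed.
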